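(* Let $G=(V,E)$ be a finite, connected, triangle-free graph that contains no dominated vertices and for which $\gamma(G)\ge 3$. Then $\mathrm{cc}(G)>2$.
   Context: All graphs are finite, connected and reflexive (a loop at every vertex; moving along a loop means passing); loops are ignored for triangles and neighbourhoods. $N(u)$ is the open neighbourhood and $N[u]=N(u)\cup\{u\}$. $\gamma$ denotes domination number. A vertex $u$ is dominated if there is a vertex $v\neq u$ with $N(u)\subseteq N[v]$. Cops and Attacking Robbers: the cop player places $k$ cops on vertices, then the robber chooses a vertex. In each round the cops move (each cop moves to an adjacent vertex or passes), then the robber moves (to an adjacent vertex or passes). The cops win if after finitely many moves a cop moves onto the robber's vertex. Additionally, if the robber moves onto a vertex occupied by a cop, exactly one cop on that vertex is removed from the game; the robber's initial placement on a cop's vertex does not count as an attack. Both players play optimally. The attacking cop number $\mathrm{cc}(G)$ is the least $k$ such that $k$ cops can guarantee a win. *)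

(* Defs.v *)
From mathcomp Require Import all_boot.
Set Implicit Arguments. Unset Strict Implicit. Unset Printing Implicit Defensive.

Section Graph.
Variables (V : finType) (e : rel V).
(* e is the (loopless) adjacency relation; loops/passing are handled by
   allowing "stay or move along an edge". *)

Definition triangle_free : Prop :=
  forall x y z : V, e x y -> e y z -> e x z -> False.

Definition nbhd (u : V) : {set V} := [set w | e u w].
Definition cnbhd (u : V) : {set V} := u |: nbhd u.

Definition dominated (u : V) : Prop :=
  exists v : V, v != u /\ nbhd u \subset cnbhd v.

Definition dominating (D : {set V}) : Prop :=
  forall x : V, x \in D \/ exists2 y, y \in D & e x y.

Definition step (x y : V) : bool := (x == y) || e x y.

Definition cop_step (cs cs' : seq V) : bool := all2 step cs cs'.

(* CopsWin cs r : it is the cops' turn, the remaining cops are at cs and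
   the robber is at r; the cops can force a capture in finitely many moves.
   After the cops' move, if a cop stands on r the robber is captured.
   Otherwise the robber moves to r' (or passes); if r' carries a cop,
   exactly one cop on r' is removed (rem r' cs'). *)
Inductive CopsWin : seq V -> V -> Prop :=
| cw_capture cs r cs' :
    cop_step cs cs' -> r \in cs' -> CopsWin cs r
| cw_move cs r cs' :
    cop_step cs cs' ->
    (forall r', step r r' -> CopsWin (rem r' cs') r') ->
    CopsWin cs r.

(* k cops can guarantee a win: there is a placement of k cops such that,
   whichever vertex the robber chooses (placing on a cop's vertex is not an
   attack), the cops, moving first, force a capture. *)
Definition cops_win (k : nat) : Prop :=
  exists cs : seq V, size cs = k /\ forall r : V, CopsWin cs r.

Definition cc_gt (k : nat) : Prop := forall j, j <= k -> ~ cops_win j.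

End Graph.

(* Main.v *)
Require Import Defs.
From mathcomp Require Import all_boot.

Section Proof.
Variables (V : finType) (e : rel V).
Hypotheses (e_sym : symmetric e) (e_tf : triangle_free e)
  (no_dom : forall u : V, ~ dominated e u).

Definition good (cs : seq V) (r : V) : bool :=
  (size cs <= 2) && all (fun c => ~~ step e c r) cs.

Lemma nodom_w r v : v != r -> exists w, [&& e r w, v != w & ~~ e v w].
Proof.
move=> vr.
have : ~~ (nbhd e r \subset cnbhd e v).
  by apply/negP => H; apply: (no_dom r); exists v; split.
case/subsetPn => w; rewrite /cnbhd /nbhd !inE negb_or => rw /andP[wv vw].
by exists w; rewrite rw vw eq_sym wv.
Qed.

Lemma key d1 d2 r : r != d1 -> r != d2 -> e d1 r ->
  exists r', step e r r' && good (rem r' [:: d1; d2]) r'.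
Proof.
move=> rd1 rd2 d1r.
have rd1' : e r d1 by rewrite e_sym.
case: (boolP ((d1 != d2) && ~~ e d1 d2)) => [/andP[n12 ne12]|].
  exists d1; rewrite /step /good /= eqxx rd1' orbT /= andbT.
  by rewrite negb_or eq_sym n12 e_sym ne12.
rewrite negb_and !negbK => /orP[/eqP <-|e12].
  have [w /and3P[rw d1w nd1w]] := @nodom_w r d1 (ltac:(by rewrite eq_sym)).
  exists w; rewrite /step /good /= rw orbT /=.
  case: ifP => [/eqP E|_]; first by move: d1w; rewrite E eqxx.
  case: ifP => [/eqP E|_]; first by move: d1w; rewrite E eqxx.
  by rewrite /= negb_or d1w nd1w.
have [w /and3P[rw d2w nd2w]] := @nodom_w r d2 (ltac:(by rewrite eq_sym)).
have d1w : d1 != w.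
  by apply/eqP => E; move: nd2w; rewrite -E e_sym e12.
have nd1w : ~~ e d1 w.
  by apply/negP => H; exact: (e_tf _ _ _ rd1' H rw).
exists w; rewrite /step /good /= rw orbT /=.
case: ifP => [/eqP E|_]; first by move: d1w; rewrite E eqxx.
case: ifP => [/eqP E|_]; first by move: d2w; rewrite E eqxx.
by rewrite /= !negb_or d1w nd1w d2w nd2w.
Qed.
Lemma good_swap a b x y : good (rem x [:: a; b]) y = good (rem x [:: b; a]) y.
Proof.
rewrite /good /=; have [ax|ax] := eqVneq a x; have [bx|bx] := eqVneq b x;
  subst; rewrite /= ?eqxx //=.
all: rewrite ?(negbTE ax) ?(negbTE bx) /= ?andbT // andbC.
all: done.
Qed.
Lemma closure cs r : good cs r -> forall cs', cop_step e cs cs' ->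
  r \notin cs' /\ exists r', step e r r' && good (rem r' cs') r'.
Proof.
case: cs => [|c1 [|c2 [|c3 cs]]]; rewrite /good //=.
- move=> _ [|d cs'] // _; split => //; exists r; by rewrite /step eqxx.
- rewrite andbT => nc1; case=> [|d1 [|d2 cs']] //=; rewrite ?andbF ?andbT // => s1.
  have rd1 : r != d1.
    apply/eqP => E; move: nc1; by rewrite E s1.
  split; first by rewrite inE.
  case: (boolP (e d1 r)) => d1r.
    by exists d1; rewrite /step eqxx /= e_sym d1r orbT.
  exists r; rewrite /step eqxx /= eq_sym (negbTE rd1) /=.
  by rewrite /step negb_or eq_sym rd1 d1r.
- rewrite andbT => /andP[nc1 nc2]; case=> [|d1 [|d2 [|d3 cs']]] //=;
    rewrite ?andbF ?andbT // => /andP[s1 s2].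
  have rd1 : r != d1.
    apply/eqP => E; move: nc1; by rewrite E s1.
  have rd2 : r != d2.
    apply/eqP => E; move: nc2; by rewrite E s2.
  split; first by rewrite !inE negb_or rd1 rd2.
  case: (boolP (e d1 r)) => d1r; first exact: key.
  case: (boolP (e d2 r)) => d2r.
    have [r' /andP[sr' g]] := @key d2 d1 r rd2 rd1 d2r.
    by exists r'; rewrite sr' /=; rewrite good_swap in g; exact: g.
  exists r; rewrite /step eqxx /= eq_sym (negbTE rd1) eq_sym (negbTE rd2) /=.
  by rewrite !negb_or eq_sym rd1 d1r eq_sym rd2 d2r.
Qed.

Lemma nowin cs r : CopsWin e cs r -> good cs r -> False.
Proof.
elim=> {cs r} [cs r cs' cst rin|cs r cs' cst _ IH] g.
  by have [/negP] := @closure _ _ g _ cst.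
have [_ [r' /andP[s g']]] := @closure _ _ g _ cst.
exact: IH s g'.
Qed.

End Proof.

Theorem lemma2 (V : finType) (e : rel V)
  (e_sym : symmetric e) (e_irr : irreflexive e)
  (e_conn : forall x y : V, connect e x y)
  (e_tf : triangle_free e)
  (no_dom : forall u : V, ~ dominated e u)
  (gamma_ge3 : forall D : {set V}, dominating e D -> 3 <= #|D|) :
  cc_gt e 2.
Proof.
move=> j hj [cs [hs hw]].
set D := [set x in cs].
have hD : #|D| <= 2.
  by rewrite cardsE (leq_trans (card_size cs)) // hs.
have : ~~ [forall x, (x \in D) || [exists y in D, e x y]].
  apply/negP => /forallP H; have := gamma_ge3 D.
  have : dominating e D.
    move=> x; case/orP: (H x) => [->|/existsP[y /andP[yD exy]]]; first by left.
    by right; exists y.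
  by move=> Hd /(_ Hd); rewrite leqNgt ltnS hD.
rewrite negb_forall => /existsP[x]; rewrite negb_or => /andP[xD nex].
apply: (@nowin V e e_sym e_tf no_dom cs x (hw x)).
rewrite /good hs hj /=; apply/allP => c cin.
rewrite /step negb_or; apply/andP; split.
  by apply/eqP => E; move: xD; rewrite inE -E cin.
apply/negP => ecx; move/existsP: nex; apply; exists c.
by rewrite inE cin e_sym.
Qed.
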